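(* Let $G$ be a dense $K_4^3\cup e$-free $3$-graph with $\lambda(G)>\frac{\sqrt3}{18}$. Then $G$ is $X_3$-free.
   Context: $K_4^3\cup e$ is the $3$-graph on $\{1,\dots,7\}$ with edges $\{123,124,134,234,567\}$. For a $3$-graph $G$ on $[n]$, $\lambda(G)=\max\{\sum_{e\in E(G)}\prod_{i\in e}x_i:\sum_ix_i=1,x_i\ge0\}$. An $r$-graph $G$ is dense if $\lambda(G')<\lambda(G)$ for every proper subgraph $G'$ of $G$. $X_i$ is the $3$-graph on $[2i+2]$ in which $\{1,2,2j+1,2j+2\}$ spans a $K_4^3$ for each $1\le j\le i$, and no other edges. *)

(* Defs.v *)
From HB Require Import structures.
From mathcomp Require Import all_boot all_order all_algebra.
From mathcomp Require Import classical_sets reals.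
Set Implicit Arguments. Unset Strict Implicit. Unset Printing Implicit Defensive.
Import Order.TTheory GRing.Theory Num.Theory.
Local Open Scope ring_scope.

Definition uniform3 (n : nat) (E : {set {set 'I_n}}) : Prop :=
  forall e, e \in E -> #|e| = 3%N.

Local Open Scope classical_set_scope.
Definition lagr (R : realType) (n : nat) (V : {set 'I_n}) (E : {set {set 'I_n}}) : R :=
  sup [set s : R | exists x : 'I_n -> R,
        (forall i, 0 <= x i) /\ (forall i, i \notin V -> x i = 0) /\
        (\sum_i x i = 1) /\ s = \sum_(e in E) \prod_(i in e) x i].

Local Close Scope classical_set_scope.
Definition lambda (R : realType) (n : nat) (E : {set {set 'I_n}}) : R :=
  lagr R [set: 'I_n]%SET E.

Definition subgraph (n : nat) (E : {set {set 'I_n}}) (V : {set 'I_n})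
  (E' : {set {set 'I_n}}) : Prop :=
  E' \subset E /\ (forall e, e \in E' -> e \subset V).

Definition dense (R : realType) (n : nat) (E : {set {set 'I_n}}) : Prop :=
  forall V E', subgraph E V E' -> ~ (V = [set: 'I_n]%SET /\ E' = E) ->
    lagr R V E' < lambda R E.

Definition contains (n k : nat) (E : {set {set 'I_n}}) (F : seq {set 'I_k}) : Prop :=
  exists f : 'I_k -> 'I_n, injective f /\ forall e, e \in F -> f @: e \in E.

Definition hfree (n k : nat) (E : {set {set 'I_n}}) (F : seq {set 'I_k}) : Prop :=
  ~ contains E F.

Definition tri (k a b c : nat) : {set 'I_k.+1} := [set inord a; inord b; inord c].

(* K_4^3 u e on {1..7} (0-indexed: {0..6}): 123,124,134,234,567 *)
Definition K43e : seq {set 'I_7} :=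
  [:: tri 6 0 1 2; tri 6 0 1 3; tri 6 0 2 3; tri 6 1 2 3; tri 6 4 5 6].

Definition K4on (k a b c d : nat) : seq {set 'I_k.+1} :=
  [:: tri k a b c; tri k a b d; tri k a c d; tri k b c d].

(* X_i on [2i+2]: {1,2,2j+1,2j+2} spans K_4^3 for 1<=j<=i (0-indexed: {0,1,2j,2j+1}) *)
Definition X (i : nat) : seq {set 'I_(2 * i).+2} :=
  flatten [seq K4on (2 * i).+1 0 1 (2 * j) (2 * j + 1) | j <- iota 1 i].

(* Main.v *)
Require Import Defs.
From HB Require Import structures.
From mathcomp Require Import all_boot all_order all_algebra.
From mathcomp Require Import classical_sets reals.
From mathcomp Require Import ring lra.
Import Order.TTheory GRing.Theory Num.Theory.
Local Open Scope ring_scope.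

Lemma amgm3 (R : realFieldType) (a b c : R) : 0 <= a -> 0 <= b -> 0 <= c ->
  27 * (a * b * c) <= (a + b + c) ^+ 3.
Proof.
move=> ha hb hc.
rewrite -subr_ge0.
have -> : (a + b + c) ^+ 3 - 27 * (a * b * c) =
  (a + b + c) * ((a - b) ^+ 2 + (b - c) ^+ 2 + (c - a) ^+ 2) / 2
  + 3 * (b * (a - c) ^+ 2 + a * (b - c) ^+ 2 + c * (a - b) ^+ 2) by field.
have s1 := sqr_ge0 (a - b); have s2 := sqr_ge0 (b - c); have s3 := sqr_ge0 (c - a).
have s4 := sqr_ge0 (a - c).
apply: addr_ge0; first by apply: divr_ge0; [apply: mulr_ge0|]; lra.
apply: mulr_ge0 => //; apply: addr_ge0; [apply: addr_ge0|]; apply: mulr_ge0 => //; exact: sqr_ge0.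
Qed.

Lemma hbound (R : realFieldType) (r s : R) : 0 <= r -> r ^+ 2 = 3 -> 0 <= s -> s <= 1 ->
  s * (1 - s) ^+ 2 / 2 + s ^+ 2 * (1 - s) / 4 <= r / 18.
Proof.
move=> hr hr2 hs0 hs1.
set u := s / 2.
have hu : s = 2 * u by rewrite /u; field.
rewrite hu.
have -> : 2 * u * (1 - 2 * u) ^+ 2 / 2 + (2 * u) ^+ 2 * (1 - 2 * u) / 4
   = u - 3 * u ^+ 2 + 2 * u ^+ 3 by field.
have id : r / 18 - (u - 3 * u ^+ 2 + 2 * u ^+ 3) =
  2 * (u - (3 - r) / 6) ^+ 2 * (1/2 + r / 3 - u) + (3 - r ^+ 2) * (u / 6 + (2 * r - 9) / 108).
  by field.
rewrite hr2 subrr mul0r addr0 in id.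
rewrite -subr_ge0 id.
apply: mulr_ge0; first by apply: mulr_ge0 => //; apply: sqr_ge0.
have : u <= 1/2 by rewrite /u; lra.
lra.
Qed.

Lemma g2bound (R : realFieldType) (s : R) : 0 <= s -> 13 * s <= 4 ->
  s * (1 - s) ^+ 2 / 2 + s ^+ 2 * (1 - s) / 4 + (1 - s) ^+ 3 / 27 - s * (1 - s) ^+ 2 / 12 <= 1 / 11.
Proof.
move=> h0 h1.
nra.
Qed.

Lemma final_ineq (R : realFieldType) (r xa xb q1 q2 q3 Qw : R) :
  0 <= r -> r ^+ 2 = 3 -> 0 <= xa -> 0 <= xb -> 0 <= q1 -> 0 <= q2 -> 0 <= q3 ->
  q1 + q2 + q3 <= 1 - (xa + xb) -> (q1 ^+ 2 + q2 ^+ 2 + q3 ^+ 2) / 2 <= Qw ->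
  (xa + xb) * ((1 - (xa + xb)) ^+ 2 - Qw) / 2
  + ((xa + xb) ^+ 2 - (xa ^+ 2 + xb ^+ 2)) * (1 - (xa + xb)) / 2
  + q1 * q2 * q3 <= r / 18.
Proof.
move=> hr hr2 ha hb h1 h2 h3 hp hQ.
have [s es] : {s | s = xa + xb} by exists (xa + xb).
rewrite -es in hp *.
have [t et] : {t | t = 1 - s} by exists (1 - s).
rewrite -et in hp *.
have [p ep] : {p | p = q1 + q2 + q3} by exists (q1 + q2 + q3).
rewrite -ep in hp.
have hs0 : 0 <= s by rewrite es; lra.
have ht0 : 0 <= t by lra.
have hs1 : s <= 1 by lra.
have hp0 : 0 <= p by lra.
have hA : (s ^+ 2 - (xa ^+ 2 + xb ^+ 2)) * t / 2 <= s ^+ 2 * t / 4.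
  rewrite -subr_ge0.
  have -> : s ^+ 2 * t / 4 - (s ^+ 2 - (xa ^+ 2 + xb ^+ 2)) * t / 2 = (xa - xb) ^+ 2 * t / 4.
    by rewrite es; field.
  by apply: divr_ge0 => //; apply: mulr_ge0 => //; apply: sqr_ge0.
have hB : s * (t ^+ 2 - Qw) / 2 <= s * t ^+ 2 / 2 - s * (q1 ^+ 2 + q2 ^+ 2 + q3 ^+ 2) / 4.
  have : s * ((q1 ^+ 2 + q2 ^+ 2 + q3 ^+ 2) / 2) <= s * Qw by apply: ler_wpM2l.
  lra.
have hC : 27 * (q1 * q2 * q3) <= p ^+ 3 by rewrite ep; apply: amgm3.
have hD : p ^+ 2 <= 3 * (q1 ^+ 2 + q2 ^+ 2 + q3 ^+ 2).
  have e1 := sqr_ge0 (q1 - q2); have e2 := sqr_ge0 (q2 - q3); have e3 := sqr_ge0 (q1 - q3).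
  rewrite -subr_ge0.
  have -> : 3 * (q1 ^+ 2 + q2 ^+ 2 + q3 ^+ 2) - p ^+ 2 = (q1 - q2) ^+ 2 + (q2 - q3) ^+ 2 + (q1 - q3) ^+ 2.
    by rewrite ep; ring.
  lra.
have hE : q1 * q2 * q3 - s * (q1 ^+ 2 + q2 ^+ 2 + q3 ^+ 2) / 4 <= p ^+ 2 * (p / 27 - s / 12).
  have : s * (p ^+ 2) <= s * (3 * (q1 ^+ 2 + q2 ^+ 2 + q3 ^+ 2)) by apply: ler_wpM2l.
  have -> : p ^+ 2 * (p / 27 - s / 12) = p ^+ 3 / 27 - s * p ^+ 2 / 12 by field.
  lra.
have hF : s * t ^+ 2 / 2 + s ^+ 2 * t / 4 <= r / 18 by rewrite et; apply: hbound.
case: (lerP (p / 27) (s / 12)) => hc.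
  have : p ^+ 2 * (p / 27 - s / 12) <= 0.
    apply: mulr_ge0_le0; [exact: sqr_ge0 | lra].
  lra.
have hpt : p <= t by [].
have h13 : 13 * s <= 4 by lra.
have hG : p ^+ 2 * (p / 27 - s / 12) <= t ^+ 2 * (t / 27 - s / 12).
  apply: ler_pM; [exact: sqr_ge0 | lra | | lra].
  by rewrite ler_sqr ?nnegrE.
have hH := @g2bound R s hs0 h13.
have hI : 1 / 11 <= r / 18.
  have : 18 / 11 <= r by nra.
  lra.
rewrite -et in hH.
lra.
Qed.

Set Implicit Arguments. Unset Strict Implicit.

Section Sums.
Variable R : realFieldType.
Variable n : nat.
Implicit Types (x : 'I_n -> R) (A : {set 'I_n}).

Definition S3 (G : 'I_n -> 'I_n -> 'I_n -> R) : R :=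
  \sum_i \sum_j \sum_k G i j k.

Lemma eq_S3 G H : (forall i j k, G i j k = H i j k) -> S3 G = S3 H.
Proof. by move=> h; apply: eq_bigr => i _; apply: eq_bigr => j _; apply: eq_bigr. Qed.

Lemma ler_S3 G H : (forall i j k, G i j k <= H i j k) -> S3 G <= S3 H.
Proof. by move=> h; apply: ler_sum => i _; apply: ler_sum => j _; apply: ler_sum. Qed.

Lemma S3D G H : S3 (fun i j k => G i j k + H i j k) = S3 G + S3 H.
Proof.
rewrite /S3 -big_split; apply: eq_bigr => i _.
rewrite -big_split; apply: eq_bigr => j _; by rewrite -big_split.
Qed.

Lemma S3Z c G : S3 (fun i j k => c * G i j k) = c * S3 G.
Proof.
rewrite /S3 mulr_sumr; apply: eq_bigr => i _.
rewrite mulr_sumr; apply: eq_bigr => j _; by rewrite mulr_sumr.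
Qed.

Lemma swap12 G : S3 G = S3 (fun i j k => G j i k).
Proof. by rewrite /S3 exchange_big. Qed.

Lemma swap23 G : S3 G = S3 (fun i j k => G i k j).
Proof. by rewrite /S3; apply: eq_bigr => i _; rewrite exchange_big. Qed.

Lemma S3prod (f g h : 'I_n -> R) :
  S3 (fun i j k => f i * g j * h k) = (\sum_i f i) * (\sum_i g i) * (\sum_i h i).
Proof.
rewrite /S3 -mulrA mulr_suml; apply: eq_bigr => i _.
rewrite mulr_suml mulr_sumr; apply: eq_bigr => j _.
rewrite mulrA mulr_sumr; apply: eq_bigr => k _; ring.
Qed.

Definition xxx x i j k := x i * x j * x k.

Definition Bsym (F : 'I_n -> 'I_n -> 'I_n -> R) i j k :=
  F i j k + F i k j + F j i k + F j k i + F k i j + F k j i.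

Lemma S3sym x F :
  S3 (fun i j k => xxx x i j k * Bsym F i j k) = 6 * S3 (fun i j k => xxx x i j k * F i j k).
Proof.
rewrite /Bsym.
have e1 : S3 (fun i j k => xxx x i j k * F i k j) = S3 (fun i j k => xxx x i j k * F i j k).
  rewrite swap23; apply: eq_S3 => i j k /=; rewrite /xxx; ring.
have e2 : S3 (fun i j k => xxx x i j k * F j i k) = S3 (fun i j k => xxx x i j k * F i j k).
  rewrite swap12; apply: eq_S3 => i j k /=; rewrite /xxx; ring.
have e3 : S3 (fun i j k => xxx x i j k * F j k i) = S3 (fun i j k => xxx x i j k * F i j k).
  rewrite swap12 swap23; apply: eq_S3 => i j k /=; rewrite /xxx; ring.
have e4 : S3 (fun i j k => xxx x i j k * F k i j) = S3 (fun i j k => xxx x i j k * F i j k).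
  rewrite swap23 swap12; apply: eq_S3 => i j k /=; rewrite /xxx; ring.
have e5 : S3 (fun i j k => xxx x i j k * F k j i) = S3 (fun i j k => xxx x i j k * F i j k).
  rewrite swap12 swap23 swap12; apply: eq_S3 => i j k /=; rewrite /xxx; ring.
rewrite (@eq_S3 _ (fun i j k =>
   xxx x i j k * F i j k + xxx x i j k * F i k j + xxx x i j k * F j i k
 + xxx x i j k * F j k i + xxx x i j k * F k i j + xxx x i j k * F k j i));
  last by move=> i j k; ring.
rewrite !S3D e1 e2 e3 e4 e5; ring.
Qed.


Lemma indC (b : bool) : (~~ b)%:R = 1 - b%:R :> R.
Proof. by case: b; rewrite /= ?subr0 ?subrr. Qed.

Lemma ind2 (b : bool) : b%:R * b%:R = b%:R :> R.
Proof. by case: b; rewrite /= ?mulr0 ?mulr1. Qed.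

Lemma ind_ge0 (b : bool) : 0 <= b%:R :> R.
Proof. by case: b; rewrite /= ?lexx ?ler01. Qed.

Lemma ind_le1 (b : bool) : b%:R <= 1 :> R.
Proof. by case: b; rewrite /= ?lexx ?ler01. Qed.

Lemma sum_pred1 (j : 'I_n) (G : 'I_n -> R) : \sum_k (j == k)%:R * G k = G j.
Proof.
rewrite (bigD1 j) //= eqxx mul1r big1 ?addr0 // => k hk.
by rewrite eq_sym (negbTE hk) mul0r.
Qed.

Lemma sum_ind A (G : 'I_n -> R) : \sum_i G i * (i \in A)%:R = \sum_(i in A) G i.
Proof.
rewrite [RHS]big_mkcond; apply: eq_bigr => i _.
by case: (i \in A); rewrite /= ?mulr1 ?mulr0.
Qed.

Lemma pairsum (y : 'I_n -> R) :
  \sum_j \sum_k y j * y k * (j != k)%:R = (\sum_i y i) ^+ 2 - \sum_i y i ^+ 2.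
Proof.
rewrite expr2 mulr_suml -sumrB; apply: eq_bigr => j _.
rewrite mulr_sumr.
have -> : \sum_k y j * y k * (j != k)%:R = \sum_k (y j * y k - (j == k)%:R * (y j * y k)).
  by apply: eq_bigr => k _; rewrite indC; ring.
rewrite sumrB (sum_pred1 j (fun k => y j * y k)) expr2 //.
Qed.

Lemma S3split1 (f : 'I_n -> R) G : S3 (fun i j k => f i * G j k) = (\sum_i f i) * \sum_j \sum_k G j k.
Proof.
rewrite /S3 mulr_suml; apply: eq_bigr => i _.
rewrite mulr_sumr; apply: eq_bigr => j _; by rewrite mulr_sumr.
Qed.

Lemma S3split3 (h : 'I_n -> R) G : S3 (fun i j k => G i j * h k) = (\sum_i \sum_j G i j) * \sum_k h k.
Proof.
rewrite /S3 mulr_suml; apply: eq_bigr => i _.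
rewrite mulr_suml; apply: eq_bigr => j _; by rewrite mulr_sumr.
Qed.

Lemma evalE1 x A :
  S3 (fun i j k => xxx x i j k * ((i \in A)%:R * (j \notin A)%:R * (k \notin A)%:R * (j != k)%:R))
  = (\sum_i x i * (i \in A)%:R) *
    ((\sum_i x i * (i \notin A)%:R) ^+ 2 - \sum_i x i ^+ 2 * (i \notin A)%:R).
Proof.
rewrite (@eq_S3 _ (fun i j k => (x i * (i \in A)%:R) *
   ((x j * (j \notin A)%:R) * (x k * (k \notin A)%:R) * (j != k)%:R))); last first.
  by move=> i j k; rewrite /xxx; ring.
rewrite S3split1 pairsum; congr (_ * (_ - _)).
by apply: eq_bigr => i _; rewrite exprMn [_%:R ^+ 2]expr2 ind2.
Qed.

Lemma evalE2 x A :
  S3 (fun i j k => xxx x i j k * ((i \in A)%:R * (j \in A)%:R * (k \notin A)%:R * (i != j)%:R))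
  = ((\sum_i x i * (i \in A)%:R) ^+ 2 - \sum_i x i ^+ 2 * (i \in A)%:R) *
    (\sum_i x i * (i \notin A)%:R).
Proof.
rewrite (@eq_S3 _ (fun i j k => 
   ((x i * (i \in A)%:R) * (x j * (j \in A)%:R) * (i != j)%:R) * (x k * (k \notin A)%:R))); last first.
  by move=> i j k; rewrite /xxx; ring.
rewrite S3split3 pairsum; congr ((_ - _) * _).
by apply: eq_bigr => i _; rewrite exprMn [_%:R ^+ 2]expr2 ind2.
Qed.

Lemma evalE3 x (P1 P2 P3 : {set 'I_n}) :
  S3 (fun i j k => xxx x i j k * ((i \in P1)%:R * (j \in P2)%:R * (k \in P3)%:R))
  = (\sum_i x i * (i \in P1)%:R) * (\sum_i x i * (i \in P2)%:R) * (\sum_i x i * (i \in P3)%:R).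
Proof.
rewrite -S3prod; apply: eq_S3 => i j k; rewrite /xxx; ring.
Qed.

End Sums.

Lemma card3_set (T : finType) (e : {set T}) : #|e| = 3%N ->
  exists u v w, [/\ u != v, u != w, v != w & e = [set u; v; w]].
Proof.
move=> he.
have : e != finset.set0 by rewrite -card_gt0 he.
case/set0Pn => u hu.
have : #|e :\ u| == 2%N by move: he; rewrite (cardsD1 u) hu add1n => -[->].
case/cards2P => v [w [hvw hD]].
have hv : v \in e :\ u by rewrite hD !inE eqxx.
have hw : w \in e :\ u by rewrite hD !inE eqxx orbT.
move: hv hw; rewrite !inE => /andP [hvu _] /andP [hwu _].
exists u, v, w; split => //; try by rewrite eq_sym.
rewrite -(finset.setD1K hu) hD; apply/finset.setP => y; rewrite !inE.
by case: (y == u); case: (y == v); case: (y == w).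
Qed.

Lemma card_set3 (T : finType) (u v w : T) : u != v -> u != w -> v != w ->
  #|[set u; v; w]| = 3%N.
Proof.
move=> huv huw hvw.
rewrite finset.setUC cardsU1 cards2 huv !inE negb_or eq_sym huw eq_sym hvw.
by [].
Qed.

Lemma in_triple (T : finType) (e : {set T}) (i j k : T) : #|e| = 3%N ->
  i != j -> i != k -> j != k ->
  (i \in e) && (j \in e) && (k \in e) = (e == [set i; j; k]).
Proof.
move=> he hij hik hjk.
apply/idP/idP.
  case/andP => /andP [hi hj] hk.
  rewrite eq_sym eqEcard he card_set3 // leqnn andbT.
  by apply/fintype.subsetP => y; rewrite !inE => /orP [/orP [] | ] /eqP ->.
by move/eqP ->; rewrite !inE !eqxx !orbT.
Qed.


Section Expand.
Variable R : realFieldType.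
Variable n : nat.

Definition Dd (i j k : 'I_n) := (i != j) && (i != k) && (j != k).
Definition T3 (x : 'I_n -> R) (e : {set 'I_n}) i j k :=
  ((i \in e) && (j \in e) && (k \in e))%:R * ((Dd i j k)%:R * xxx x i j k).

Lemma ind_and (a b : bool) : (a && b)%:R = a%:R * b%:R :> R.
Proof. by case: a; case: b; rewrite /= ?mulr0 ?mulr1. Qed.

Lemma sum3 (u v w : 'I_n) (G : 'I_n -> R) : u != v -> u != w -> v != w ->
  \sum_i (i \in [set u; v; w])%:R * G i = G u + G v + G w.
Proof.
move=> huv huw hvw.
rewrite (eq_bigr (fun i => G i * (i \in [set u; v; w])%:R)); last by move=> i _; rewrite mulrC.
rewrite sum_ind finset.setUC big_setU1; last by rewrite !inE negb_or eq_sym huw eq_sym hvw.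
rewrite big_setU1 ?big_set1; last by rewrite !inE.
by rewrite /=; ring.
Qed.

Lemma expand3 (x : 'I_n -> R) (e : {set 'I_n}) : #|e| = 3%N -> 6 * \prod_(i in e) x i = S3 (T3 x e).
Proof.
move/card3_set => [u [v [w [huv huw hvw ->]]]].
rewrite /S3 /T3.
transitivity (\sum_i (i \in [set u; v; w])%:R * (\sum_j (j \in [set u; v; w])%:R *
   (\sum_k (k \in [set u; v; w])%:R * ((Dd i j k)%:R * xxx x i j k)))); last first.
  apply: eq_bigr => i _; rewrite mulr_sumr; apply: eq_bigr => j _.
  rewrite !mulr_sumr; apply: eq_bigr => k _; rewrite !ind_and; ring.
rewrite !sum3 //.
rewrite finset.setUC big_setU1; last by rewrite !inE negb_or eq_sym huw eq_sym hvw.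
rewrite big_setU1 ?big_set1; last by rewrite !inE.
have hvu : (v == u) = false by rewrite eq_sym (negbTE huv).
have hwu : (w == u) = false by rewrite eq_sym (negbTE huw).
have hwv : (w == v) = false by rewrite eq_sym (negbTE hvw).
rewrite /Dd !eqxx (negbTE huv) (negbTE huw) (negbTE hvw) hvu hwu hwv /= /xxx.
ring.
Qed.

Lemma collapse (E : {set {set 'I_n}}) i j k :
  (forall e, e \in E -> #|e| = 3%N) -> Dd i j k ->
  \sum_(e in E) ((i \in e) && (j \in e) && (k \in e))%:R = ([set i; j; k] \in E)%:R :> R.
Proof.
move=> hU /andP [/andP [hij hik] hjk].
rewrite (eq_bigr (fun e => (e == [set i; j; k])%:R)); last first.
  by move=> e he; rewrite in_triple // hU.
case hS : ([set i; j; k] \in E).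
  rewrite (bigD1 [set i; j; k]) //= eqxx big1 ?addr0 // => e /andP [_ /negbTE ->] //.
rewrite big1 // => e he.
case: eqP => // hE; by rewrite -hE he in hS.
Qed.

End Expand.

Section Key.
Variable R : realFieldType.
Variable n : nat.
Implicit Types (i j k a b c d : 'I_n).

Definition Bab (AB : {set 'I_n}) i j k : R :=
  (i \in AB)%:R * (j \notin AB)%:R * (k \notin AB)%:R * (j != k)%:R / 2
  + (i \in AB)%:R * (j \in AB)%:R * (k \notin AB)%:R * (i != j)%:R / 2.

Definition Bt (P1 P2 P3 : {set 'I_n}) i j k : R := (i \in P1)%:R * (j \in P2)%:R * (k \in P3)%:R.

Lemma notall3 a b i j k : i != j -> i != k -> j != k ->
  i \in [set a; b] -> j \in [set a; b] -> k \in [set a; b] -> False.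
Proof.
move=> hij hik hjk; rewrite !inE => /orP [] /eqP hi /orP [] /eqP hj /orP [] /eqP hk;
  subst; by move: hij hik hjk; rewrite ?eqxx.
Qed.

Lemma Bab_ge1 a b i j k : Dd i j k ->
  (i \in [set a; b]) || (j \in [set a; b]) || (k \in [set a; b]) ->
  1 <= Bsym (Bab [set a; b]) i j k.
Proof.
move=> /andP [/andP [hij hik] hjk] h.
have hn := @notall3 a b i j k hij hik hjk.
have hji : j != i by rewrite eq_sym.
have hki : k != i by rewrite eq_sym.
have hkj : k != j by rewrite eq_sym.
rewrite /Bsym /Bab hij hik hjk hji hki hkj.
move: hn h; case: (i \in [set a; b]); case: (j \in [set a; b]); case: (k \in [set a; b]) => /= hn h;
  try (by exfalso; apply: hn); try lra.
Qed.

Lemma Bab_ge0 (AB : {set 'I_n}) i j k : 0 <= Bab AB i j k.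
Proof.
rewrite /Bab; case: (i \in AB); case: (j \in AB); case: (k \in AB); case: (j != k); case: (i != j); rewrite /=; lra.
Qed.

Lemma Bt_ge0 (P1 P2 P3 : {set 'I_n}) i j k : 0 <= Bt P1 P2 P3 i j k.
Proof. by rewrite /Bt; apply: mulr_ge0; [apply: mulr_ge0|]; apply: ind_ge0. Qed.

Lemma sum6 (b1 b2 b3 b4 b5 b6 : bool) : [|| b1, b2, b3, b4, b5 | b6] ->
  1 <= b1%:R + b2%:R + b3%:R + b4%:R + b5%:R + b6%:R :> R.
Proof. by case: b1; case: b2; case: b3; case: b4; case: b5; case: b6 => //= _; lra. Qed.

Lemma hit a b c d i j k :
  i \notin [set a; b] -> j \notin [set a; b] -> k \notin [set a; b] ->
  [|| a \in [set i; j; k], b \in [set i; j; k], c \in [set i; j; k] | d \in [set i; j; k]] ->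
  [|| i \in [set c; d], j \in [set c; d] | k \in [set c; d]].
Proof.
move=> hi hj hk /or4P [] h.
- move: h; rewrite !inE => /orP [/orP [] | ] /eqP ha;
  [move: hi | move: hj | move: hk]; by rewrite -ha !inE eqxx.
- move: h; rewrite !inE => /orP [/orP [] | ] /eqP ha;
  [move: hi | move: hj | move: hk]; by rewrite -ha !inE eqxx orbT.
- move: h; rewrite !inE => /orP [/orP [] | ] /eqP <-; by rewrite !eqxx ?orbT.
- move: h; rewrite !inE => /orP [/orP [] | ] /eqP <-; by rewrite !eqxx ?orbT.
Qed.

Lemma Bt_ge1 (P1 P2 P3 : {set 'I_n}) i j k :
  (forall y, ~~ ((y \in P1) && (y \in P2))) ->
  (forall y, ~~ ((y \in P1) && (y \in P3))) ->
  (forall y, ~~ ((y \in P2) && (y \in P3))) ->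
  [|| i \in P1, j \in P1 | k \in P1] ->
  [|| i \in P2, j \in P2 | k \in P2] ->
  [|| i \in P3, j \in P3 | k \in P3] ->
  1 <= Bsym (Bt P1 P2 P3) i j k.
Proof.
move=> d12 d13 d23 h1 h2 h3.
rewrite /Bsym /Bt -!ind_and.
apply: sum6.
move: (d12 i) (d12 j) (d12 k) (d13 i) (d13 j) (d13 k) (d23 i) (d23 j) (d23 k) h1 h2 h3.
case: (i \in P1); case: (j \in P1); case: (k \in P1);
case: (i \in P2); case: (j \in P2); case: (k \in P2);
case: (i \in P3); case: (j \in P3); case: (k \in P3) => //.
Qed.

End Key.

Section Main.
Variable R : realFieldType.
Variable n : nat.

Lemma S3_sum (E : {set {set 'I_n}}) (G : {set 'I_n} -> 'I_n -> 'I_n -> 'I_n -> R) :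
  \sum_(e in E) S3 (G e) = S3 (fun i j k => \sum_(e in E) G e i j k).
Proof.
rewrite /S3 exchange_big; apply: eq_bigr => i _; rewrite exchange_big.
by apply: eq_bigr => j _; rewrite exchange_big.
Qed.

Lemma sum2 (a b : 'I_n) (G : 'I_n -> R) : a != b -> \sum_(i in [set a; b]) G i = G a + G b.
Proof. by move=> hab; rewrite big_setU1 ?big_set1 // inE. Qed.

Lemma disj2 (p q r s y : 'I_n) : p != r -> p != s -> q != r -> q != s ->
  ~~ ((y \in [set p; q]) && (y \in [set r; s])).
Proof.
move=> h1 h2 h3 h4; rewrite !inE; apply/negP => /andP [/orP [] /eqP -> /orP [] /eqP e];
  by move: h1 h2 h3 h4; rewrite e eqxx.
Qed.

Lemma xxx_ge0 (x : 'I_n -> R) i j k : (forall i, 0 <= x i) -> 0 <= xxx x i j k.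
Proof. by move=> hx; rewrite /xxx; apply: mulr_ge0; [apply: mulr_ge0|]. Qed.

Lemma Bsym_ge0 (F : 'I_n -> 'I_n -> 'I_n -> R) i j k :
  (forall i j k, 0 <= F i j k) -> 0 <= Bsym F i j k.
Proof. by move=> hF; rewrite /Bsym; repeat apply: addr_ge0; apply: hF. Qed.

Lemma Pbound (E : {set {set 'I_n}}) (x : 'I_n -> R) (r : R) (a b c1 d1 c2 d2 c3 d3 : 'I_n) :
  0 <= r -> r ^+ 2 = 3 ->
  (forall e, e \in E -> #|e| = 3%N) ->
  uniq [:: a; b; c1; d1; c2; d2; c3; d3] ->
  (forall e, e \in E -> [|| a \in e, b \in e, c1 \in e | d1 \in e]) ->
  (forall e, e \in E -> [|| a \in e, b \in e, c2 \in e | d2 \in e]) ->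
  (forall e, e \in E -> [|| a \in e, b \in e, c3 \in e | d3 \in e]) ->
  (forall i, 0 <= x i) -> \sum_i x i = 1 ->
  \sum_(e in E) \prod_(i in e) x i <= r / 18.
Proof.
move=> hr hr2 hU hu hm1 hm2 hm3 hx hx1.
move: hu; rewrite /= !inE !negb_or -!andbA.
move=> /andP [hab /andP [hac1 /andP [had1 /andP [hac2 /andP [had2 /andP [hac3 /andP [had3 /andP [hbc1 /andP [hbd1 /andP [hbc2 /andP [hbd2 /andP [hbc3 /andP [hbd3 /andP [hcd1 /andP [hc1c2 /andP [hc1d2 /andP [hc1c3 /andP [hc1d3 /andP [hd1c2 /andP [hd1d2 /andP [hd1c3 /andP [hd1d3 /andP [hcd2 /andP [hc2c3 /andP [hc2d3 /andP [hd2c3 /andP [hd2d3 /andP [hcd3 _]]]]]]]]]]]]]]]]]]]]]]]]]]]].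
pose B0 := fun i j k => Bab R [set a; b] i j k + Bt R [set c1; d1] [set c2; d2] [set c3; d3] i j k.
have dAB1 y := disj2 y hac1 had1 hbc1 hbd1.
have dAB2 y := disj2 y hac2 had2 hbc2 hbd2.
have dAB3 y := disj2 y hac3 had3 hbc3 hbd3.
have d12 y := disj2 y hc1c2 hc1d2 hd1c2 hd1d2.
have d13 y := disj2 y hc1c3 hc1d3 hd1c3 hd1d3.
have d23 y := disj2 y hc2c3 hc2d3 hd2c3 hd2d3.
have hB : forall i j k, 0 <= Bsym B0 i j k.
  move=> i j k; apply: Bsym_ge0 => i' j' k'; rewrite /B0.
  by apply: addr_ge0; [apply: Bab_ge0 | apply: Bt_ge0].
have key : forall i j k, Dd i j k -> [set i; j; k] \in E -> 1 <= Bsym B0 i j k.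
  move=> i j k hD hS.
  have -> : Bsym B0 i j k = Bsym (Bab R [set a; b]) i j k
     + Bsym (Bt R [set c1; d1] [set c2; d2] [set c3; d3]) i j k by rewrite /Bsym /B0; ring.
  have g1 : 0 <= Bsym (Bab R [set a; b]) i j k :> R.
    by apply: Bsym_ge0 => *; apply: Bab_ge0.
  have g2 : 0 <= Bsym (Bt R [set c1; d1] [set c2; d2] [set c3; d3]) i j k :> R.
    by apply: Bsym_ge0 => *; apply: Bt_ge0.
  case hA : ((i \in [set a; b]) || (j \in [set a; b]) || (k \in [set a; b])).
    have := Bab_ge1 R hD hA; lra.
  move/negbT: hA; rewrite !negb_or => /andP [/andP [hi hj] hk].
  have h1 := hit hi hj hk (hm1 _ hS).
  have h2 := hit hi hj hk (hm2 _ hS).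
  have h3 := hit hi hj hk (hm3 _ hS).
  have := Bt_ge1 R d12 d13 d23 h1 h2 h3; lra.
have step2 : forall i j k, \sum_(e in E) T3 x e i j k <= xxx x i j k * Bsym B0 i j k.
  move=> i j k; rewrite /T3 -big_distrl /=.
  have hx3 := xxx_ge0 i j k hx.
  case hD : (Dd i j k).
    rewrite (collapse R hU hD) /= mul1r mulrC.
    apply: ler_wpM2l => //.
    case hS : ([set i; j; k] \in E) => /=; first exact: key.
    exact: hB.
  by rewrite /= mulr0n mul0r mulr0; apply: mulr_ge0.
have e1 : 6 * \sum_(e in E) \prod_(i in e) x i = S3 (fun i j k => \sum_(e in E) T3 x e i j k).
  rewrite mulr_sumr -S3_sum; apply: eq_bigr => e he; apply: expand3; exact: hU.
have e2 := S3sym x B0.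
have e3 : S3 (fun i j k => xxx x i j k * B0 i j k) =
  1 / 2 * S3 (fun i j k => xxx x i j k * ((i \in [set a; b])%:R * (j \notin [set a; b])%:R
              * (k \notin [set a; b])%:R * (j != k)%:R))
  + 1 / 2 * S3 (fun i j k => xxx x i j k * ((i \in [set a; b])%:R * (j \in [set a; b])%:R
              * (k \notin [set a; b])%:R * (i != j)%:R))
  + S3 (fun i j k => xxx x i j k * ((i \in [set c1; d1])%:R * (j \in [set c2; d2])%:R
              * (k \in [set c3; d3])%:R)).
  rewrite -!S3Z -!S3D; apply: eq_S3 => i j k; rewrite /B0 /Bab /Bt; ring.
rewrite evalE1 evalE2 evalE3 in e3.
have hsA : \sum_i x i * (i \in [set a; b])%:R = x a + x b by rewrite sum_ind sum2.
have hQa : \sum_i x i ^+ 2 * (i \in [set a; b])%:R = x a ^+ 2 + x b ^+ 2.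
  by rewrite (sum_ind _ (fun i => x i ^+ 2)) sum2.
have htW : \sum_i x i * (i \notin [set a; b])%:R = 1 - (x a + x b).
  have -> : \sum_i x i * (i \notin [set a; b])%:R
     = \sum_i x i - \sum_i x i * (i \in [set a; b])%:R.
    by rewrite -sumrB; apply: eq_bigr => i _; rewrite indC; ring.
  by rewrite hx1 hsA.
have hq1 : \sum_i x i * (i \in [set c1; d1])%:R = x c1 + x d1 by rewrite sum_ind sum2.
have hq2 : \sum_i x i * (i \in [set c2; d2])%:R = x c2 + x d2 by rewrite sum_ind sum2.
have hq3 : \sum_i x i * (i \in [set c3; d3])%:R = x c3 + x d3 by rewrite sum_ind sum2.
have hs1 : \sum_i x i ^+ 2 * (i \in [set c1; d1])%:R = x c1 ^+ 2 + x d1 ^+ 2.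
  by rewrite (sum_ind _ (fun i => x i ^+ 2)) sum2.
have hs2 : \sum_i x i ^+ 2 * (i \in [set c2; d2])%:R = x c2 ^+ 2 + x d2 ^+ 2.
  by rewrite (sum_ind _ (fun i => x i ^+ 2)) sum2.
have hs3 : \sum_i x i ^+ 2 * (i \in [set c3; d3])%:R = x c3 ^+ 2 + x d3 ^+ 2.
  by rewrite (sum_ind _ (fun i => x i ^+ 2)) sum2.
have indle : forall y, (y \in [set c1; d1])%:R + (y \in [set c2; d2])%:R + (y \in [set c3; d3])%:R
    <= (y \notin [set a; b])%:R :> R.
  move=> y; move: (dAB1 y) (dAB2 y) (dAB3 y) (d12 y) (d13 y) (d23 y).
  case: (y \in [set a; b]); case: (y \in [set c1; d1]); case: (y \in [set c2; d2]);
    case: (y \in [set c3; d3]) => //= *; lra.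
have hgen : forall G : 'I_n -> R, (forall i, 0 <= G i) ->
    \sum_i G i * (i \in [set c1; d1])%:R + \sum_i G i * (i \in [set c2; d2])%:R
    + \sum_i G i * (i \in [set c3; d3])%:R <= \sum_i G i * (i \notin [set a; b])%:R.
  move=> G hG; rewrite -!big_split /=; apply: ler_sum => i _.
  rewrite -!mulrDr; apply: ler_wpM2l => //; exact: indle.
have hQw := hgen (fun i => x i ^+ 2) (fun i => sqr_ge0 (x i)).
have hqs := hgen x hx.
rewrite /= hs1 hs2 hs3 in hQw.
rewrite hq1 hq2 hq3 htW in hqs.
rewrite hsA hQa htW hq1 hq2 hq3 in e3.
set Qw := \sum_i x i ^+ 2 * (i \notin [set a; b])%:R in hQw e3.
have hQ' : ((x c1 + x d1) ^+ 2 + (x c2 + x d2) ^+ 2 + (x c3 + x d3) ^+ 2) / 2 <= Qw.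
  have f1 := sqr_ge0 (x c1 - x d1); have f2 := sqr_ge0 (x c2 - x d2);
  have f3 := sqr_ge0 (x c3 - x d3).
  nra.
have hF := @final_ineq R _ _ _ _ _ _ _ hr hr2 (hx a) (hx b) (addr_ge0 (hx c1) (hx d1))
  (addr_ge0 (hx c2) (hx d2)) (addr_ge0 (hx c3) (hx d3)) hqs hQ'.
have hle : S3 (fun i j k => \sum_(e in E) T3 x e i j k) <= S3 (fun i j k => xxx x i j k * Bsym B0 i j k).
  by apply: ler_S3.
rewrite -e1 e2 e3 in hle.
nra.
Qed.
End Main.

Unset Implicit Arguments.

Lemma trimg (n k : nat) (f : 'I_k.+1 -> 'I_n) p q r :
  f @: tri k p q r = [set f (inord p); f (inord q); f (inord r)].
Proof. by rewrite /tri !imsetU !imset_set1. Qed.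

Lemma meet n (E : {set {set 'I_n}}) (a b c d : 'I_n) :
  uniform3 E -> hfree E K43e -> uniq [:: a; b; c; d] ->
  [set a; b; c] \in E -> [set a; b; d] \in E -> [set a; c; d] \in E -> [set b; c; d] \in E ->
  forall e, e \in E -> [|| a \in e, b \in e, c \in e | d \in e].
Proof.
move=> hU hK hu h1 h2 h3 h4 e he.
apply/negPn/negP => /negP hn.
have [u [v [w [huv huw hvw he3]]]] := card3_set (hU e he).
apply: hK.
pose s := [:: a; b; c; d; u; v; w].
have hs : uniq s.
  rewrite /s -[[:: a, b, c, d, u, v & _]]/([:: a; b; c; d] ++ [:: u; v; w]) cat_uniq hu /=.
  apply/andP; split; last by rewrite !inE negb_or huv huw hvw.
  have H : forall y, y \in e -> y \in [:: a; b; c; d] -> [|| a \in e, b \in e, c \in e | d \in e].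
    move=> y hye; rewrite !inE => /orP [/eqP <- | /orP [/eqP <- | /orP [/eqP <- | /eqP <-]]];
    by rewrite hye ?orbT.
  rewrite orbF; apply/negP => /or3P [] hy1; apply: hn; apply: (H _ _ hy1);
    by rewrite he3 !inE eqxx ?orbT.
pose g (i : 'I_7) := nth a s i.
exists g; split.
  move=> i j /eqP; rewrite /g (@nth_uniq _ a s i j (ltn_ord i) (ltn_ord j) hs) => /eqP hij.
  exact: val_inj.
move=> t; rewrite /K43e !in_cons in_nil orbF.
case/orP => [/eqP -> | /orP [/eqP -> | /orP [/eqP -> | /orP [/eqP -> | /eqP ->]]]]; rewrite trimg /g !inordK //=.
by rewrite -he3.
Qed.



Theorem lemma5p11 (R : realType) (n : nat) (E : {set {set 'I_n}}) :
  uniform3 E -> dense R E -> hfree E K43e ->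
  Num.sqrt 3 / 18 < lambda R E ->
  hfree E (X 3).
Proof.
move=> hU hD hK hlam [f [finj hf]].
have hX : X 3 = [:: tri 7 0 1 2; tri 7 0 1 3; tri 7 0 2 3; tri 7 1 2 3;
                   tri 7 0 1 4; tri 7 0 1 5; tri 7 0 4 5; tri 7 1 4 5;
                   tri 7 0 1 6; tri 7 0 1 7; tri 7 0 6 7; tri 7 1 6 7] by [].
have hin : forall p q r, tri 7 p q r \in X 3 ->
    [set f (inord p); f (inord q); f (inord r)] \in E.
  by move=> p q r h; have := hf _ h; rewrite trimg.
have hu8 : uniq (map f [:: inord 0; inord 1; inord 2; inord 3; inord 4; inord 5; inord 6; inord 7]).
  by rewrite (map_inj_uniq finj) -(map_inj_uniq val_inj) /= !inordK.
have U : forall l : seq nat, uniq l -> all (fun i => i < 8)%N l -> uniq (map f (map inord l)).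
  move=> l hl ha; rewrite (map_inj_uniq finj) (map_inj_in_uniq) // => i j hi hj /(congr1 (@nat_of_ord _)).
  by rewrite !inordK // ltnS -ltnS; [apply: (allP ha j hj) | apply: (allP ha i hi)].
have m : forall p q r, tri 7 p q r \in [:: tri 7 0 1 2; tri 7 0 1 3; tri 7 0 2 3; tri 7 1 2 3;
                   tri 7 0 1 4; tri 7 0 1 5; tri 7 0 4 5; tri 7 1 4 5;
                   tri 7 0 1 6; tri 7 0 1 7; tri 7 0 6 7; tri 7 1 6 7] ->
    [set f (inord p); f (inord q); f (inord r)] \in E.
  by move=> p q r; rewrite -hX; apply: hin.
have hm1 := @meet n E (f (inord 0)) (f (inord 1)) (f (inord 2)) (f (inord 3)) hU hK
  (U [:: 0; 1; 2; 3]%N erefl erefl)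
  (m 0 1 2 ltac:(by rewrite !inE eqxx ?orbT)) (m 0 1 3 ltac:(by rewrite !inE eqxx ?orbT))
  (m 0 2 3 ltac:(by rewrite !inE eqxx ?orbT)) (m 1 2 3 ltac:(by rewrite !inE eqxx ?orbT)).
have hm2 := @meet n E (f (inord 0)) (f (inord 1)) (f (inord 4)) (f (inord 5)) hU hK
  (U [:: 0; 1; 4; 5]%N erefl erefl)
  (m 0 1 4 ltac:(by rewrite !inE eqxx ?orbT)) (m 0 1 5 ltac:(by rewrite !inE eqxx ?orbT))
  (m 0 4 5 ltac:(by rewrite !inE eqxx ?orbT)) (m 1 4 5 ltac:(by rewrite !inE eqxx ?orbT)).
have hm3 := @meet n E (f (inord 0)) (f (inord 1)) (f (inord 6)) (f (inord 7)) hU hK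
  (U [:: 0; 1; 6; 7]%N erefl erefl)
  (m 0 1 6 ltac:(by rewrite !inE eqxx ?orbT)) (m 0 1 7 ltac:(by rewrite !inE eqxx ?orbT))
  (m 0 6 7 ltac:(by rewrite !inE eqxx ?orbT)) (m 1 6 7 ltac:(by rewrite !inE eqxx ?orbT)).
have hr0 : 0 <= Num.sqrt 3 :> R by apply: sqrtr_ge0.
have hr2 : Num.sqrt 3 ^+ 2 = 3 :> R by rewrite sqr_sqrtr.
have hb : lambda R E <= Num.sqrt 3 / 18.
  rewrite /lambda /lagr; apply: ge_sup.
    exists (\sum_(e in E) \prod_(i in e) ((i == f (inord 0))%:R : R)).
    exists (fun i => ((i == f (inord 0))%:R : R)); split; first by move=> i; apply: ind_ge0.
    split; first by move=> i; rewrite inE.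
    split => //.
    rewrite (bigD1 (f (inord 0))) //= eqxx big1 ?addr0 // => i /negbTE -> //.
  move=> y [x [hx0 [_ [hx1 ->]]]].
  apply: (Pbound hr0 hr2 hU hu8 hm1 hm2 hm3 hx0 hx1).
by have := lt_le_trans hlam hb; rewrite ltxx.
Qed.
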